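(* Let $G$ be a finite group of order $n$ and $f:G\to\mathbb{Q}$ a class function with $f(g)=f(g^{-1})$ for all $g\in G$. Then all eigenvalues of the Cayley colour graph $\Gamma_f=\operatorname{Cay}(G,f)$ are rational if and only if $f^h=f$ for all $h\in\mathbb{Z}_n^*$.
   Context: $\mathbb{Z}_n^*$ is the unit group of $\mathbb{Z}/n\mathbb{Z}$; $f^h(g)=f(g^h)$. The Cayley colour graph $\operatorname{Cay}(G,f)$ has vertex set $G$ and adjacency matrix $[f(gh^{-1})]_{g,h\in G}$; its eigenvalues are those of this matrix. *)

(* Defs.v *)
From HB Require Import structures.
From mathcomp Require Import all_boot all_order all_algebra all_fingroup all_field.
Set Implicit Arguments. Unset Strict Implicit. Unset Printing Implicit Defensive.
Import GRing.Theory Num.Theory.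
Local Open Scope ring_scope.

(* Adjacency matrix of the Cayley colour graph Cay(G, f), where the finite
   group G is the whole finGroupType gT, with vertices enumerated by
   enum_val : 'I_#|gT| -> gT. *)
Definition cayley_mx (gT : finGroupType) (f : gT -> rat) : 'M[algC]_#|gT| :=
  \matrix_(i, j) ratr (f (enum_val i * (enum_val j)^-1)%g).

(* Main.v *)
Require Import Defs.
Set Warnings "-notation-overridden,-ambiguous-paths".
From HB Require Import structures.
From mathcomp Require Import all_boot all_order all_algebra all_fingroup all_solvable all_field all_character.
From mathcomp Require Import ring.
Import GRing.Theory Num.Theory.
Local Open Scope ring_scope.

Definition Mx (gT : finGroupType) (phi : gT -> algC) : 'M[algC]_#|gT| :=
  \matrix_(i, j) phi (enum_val i * (enum_val j)^-1)%g.

Arguments Mx {gT} phi.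

Lemma sum_enumT (gT : finGroupType) (F : gT -> algC) :
  \sum_(c < #|gT|) F (enum_val c) = \sum_x F x.
Proof. by rewrite -big_enum_val. Qed.

Arguments sum_enumT {gT} F.

Lemma sum_setT (gT : finGroupType) (F : gT -> algC) :
  \sum_(x in [set: gT]) F x = \sum_x F x.
Proof. by apply: eq_bigl => x; rewrite in_setT. Qed.

Lemma cardGT_neq0 (gT : finGroupType) : (#|gT|%:R : algC) != 0.
Proof. by rewrite pnatr_eq0 -lt0n; apply/card_gt0P; exists 1%g. Qed.

Lemma Mx_irr_mul (gT : finGroupType) (i j : Iirr [set: gT]) :
  Mx 'chi_i *m Mx 'chi_j = ((i == j)%:R * (#|gT|%:R / 'chi_i 1%g)) *: Mx 'chi_i.
Proof.
apply/matrixP => a b; rewrite !mxE.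
rewrite (eq_bigr (fun c => 'chi_i (enum_val a * (enum_val c)^-1)%g * 'chi_j (enum_val c * (enum_val b)^-1)%g)); last by move=> c _; rewrite !mxE.
rewrite (sum_enumT (fun x => 'chi_i (enum_val a * x^-1)%g * 'chi_j (x * (enum_val b)^-1)%g)).
set y := (enum_val a * (enum_val b)^-1)%g.
have := generalized_orthogonality_relation y i j.
rewrite cardsT sum_setT => Hg.
have ->: \sum_x 'chi_i (enum_val a * x^-1)%g * 'chi_j (x * (enum_val b)^-1)%g
   = \sum_x 'chi_i (x * y)%g * 'chi_j x^-1%g.
  have inj: injective (fun z => z^-1 * enum_val b)%g.
    by move=> z1 z2 /mulIg /invg_inj.
  rewrite (reindex_inj inj) /=; apply: eq_bigr => z _.
  rewrite invMg invgK -mulgA mulgV mulg1.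
  congr (_ * _).
  rewrite -(cfunJ _ (z * y)%g (in_setT z)) /conjg /y.
  by rewrite -!mulgA mulKg.
have Hn := cardGT_neq0 gT.
apply: (mulfI (invr_neq0 Hn)); rewrite Hg.
case: (i == j); last by rewrite !mul0r mulr0.
have H1 := irr1_neq0 i.
rewrite !mul1r; field; apply/andP; split => //.
Qed.

Definition Pj (gT : finGroupType) (j : Iirr [set: gT]) : 'M[algC]_#|gT| :=
  ('chi_j 1%g / #|gT|%:R) *: Mx 'chi_j.
Arguments Pj {gT} j.

Lemma Pj_mul (gT : finGroupType) (i j : Iirr [set: gT]) :
  Pj i *m Pj j = (i == j)%:R *: Pj i.
Proof.
rewrite /Pj -scalemxAl -scalemxAr Mx_irr_mul !scalerA.
have Hn := cardGT_neq0 gT; have H1 := irr1_neq0 i.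
case: eqVneq => [<-|_]; last by rewrite !mul0r mulr0 !scale0r.
congr (_ *: _); field; apply/andP; split => //.
Qed.

Lemma Pj_sum (gT : finGroupType) : \sum_j Pj j = 1%:M :> 'M[algC]_#|gT|.
Proof.
apply/matrixP => a b; rewrite summxE !mxE.
have Hn := cardGT_neq0 gT.
transitivity (#|gT|%:R^-1 * cfReg [set: gT] (enum_val a * (enum_val b)^-1)%g).
  rewrite cfReg_sum sum_cfunE mulr_sumr; apply: eq_bigr => j _.
  by rewrite !mxE cfunE mulrAC mulrC.
rewrite cfRegE cardsT -(inj_eq enum_val_inj) -eq_mulgV1.
case: eqP => _; last by rewrite mulr0.
by rewrite mulVf.
Qed.

Definition lamb (gT : finGroupType) (phi : 'CF([set: gT])) (i : Iirr [set: gT]) : algC :=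
  '[phi, 'chi_i] * #|gT|%:R / 'chi_i 1%g.
Arguments lamb {gT} phi i.

Lemma Mx_decomp (gT : finGroupType) (phi : 'CF([set: gT])) :
  Mx phi = \sum_i lamb phi i *: Pj i.
Proof.
apply/matrixP => a b; rewrite summxE !mxE.
rewrite {1}(cfun_sum_cfdot phi) sum_cfunE; apply: eq_bigr => i _.
rewrite !mxE cfunE /lamb.
have Hn := cardGT_neq0 gT; have H1 := irr1_neq0 i.
field; apply/andP; split => //.
Qed.

Lemma Pj_Mx (gT : finGroupType) (phi : 'CF([set: gT])) j :
  Pj j *m Mx phi = lamb phi j *: Pj j /\ Mx phi *m Pj j = lamb phi j *: Pj j.
Proof.
rewrite Mx_decomp mulmx_sumr mulmx_suml; split.
  rewrite (bigD1 j) //= big1 ?addr0 => [|i /negPf ij].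
    by rewrite -scalemxAr Pj_mul eqxx scale1r.
  by rewrite -scalemxAr Pj_mul eq_sym ij scale0r scaler0.
rewrite (bigD1 j) //= big1 ?addr0 => [|i /negPf ij].
  by rewrite -scalemxAl Pj_mul eqxx scale1r.
by rewrite -scalemxAl Pj_mul ij scale0r scaler0.
Qed.

Arguments Pj_Mx {gT} phi j.

Lemma eigen_Mx (gT : finGroupType) (phi : 'CF([set: gT])) (a : algC) :
  eigenvalue (Mx phi) a <-> exists i, a = lamb phi i.
Proof.
split.
  case/eigenvalueP => v Hv vn0.
  have [/existsP[j /eqP Ej]|/existsPn Hne] := boolP [exists j, a == lamb phi j].
    by exists j.
  exfalso; move/negP: vn0; apply; apply/eqP.
  rewrite -[v]mulmx1 -Pj_sum mulmx_sumr big1 // => j _.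
  have [H1 H2] := Pj_Mx phi j.
  have E: (a - lamb phi j) *: (v *m Pj j) = 0.
    have E1: a *: (v *m Pj j) = lamb phi j *: (v *m Pj j).
      by rewrite scalemxAl -Hv -mulmxA H2 scalemxAr.
    by rewrite scalerBl E1 subrr.
  move/eqP: E; rewrite scaler_eq0 subr_eq0 => /orP[/eqP E|/eqP //].
  by move: (Hne j); rewrite E eqxx.
case=> i ->; apply/eigenvalueP.
pose k := enum_rank (1%g : gT).
exists (row k (Pj i)).
  have [H1 _] := Pj_Mx phi i.
  by rewrite -row_mul H1; apply/rowP => m; rewrite !mxE.
apply/eqP => /rowP /(_ k); rewrite !mxE enum_rankK mulgV.
have Hn := cardGT_neq0 gT; have H1 := irr1_neq0 i.
by apply/eqP; rewrite !mulf_neq0 ?invr_neq0.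
Qed.

Lemma chi_pow (gT : finGroupType) (u : {rmorphism algC -> algC}) (k : nat) :
  (forall z : algC, z ^+ #|gT| = 1 -> u z = z ^+ k) ->
  forall (i : Iirr [set: gT]) (x : gT), u ('chi_i x) = 'chi_i (x ^+ k)%g.
Proof.
move=> Hu i x.
have Gx : x \in [set: gT] by rewrite inE.
case/char_reprP: (irr_char i) => rG ->.
have [e [[B uB rGx] [exp_e _] [-> _] _]] := repr_rsim_diag rG Gx.
rewrite cfunE in_setT mulr1n.
have D m : rG (x ^+ m)%g = invmx B *m diag_mx (\row_j (e 0 j ^+ m)) *m B.
  elim: m => [|m IH].
    rewrite expg0 repr_mx1.
    have ->: diag_mx (\row_j (e 0 j ^+ 0)) = 1%:M.
      by rewrite -diag_const_mx; congr diag_mx; apply/rowP => j; rewrite !mxE expr0.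
    by rewrite mulmx1 mulVmx.
  rewrite expgS repr_mxM ?in_setT // rGx IH.
  rewrite -!mulmxA mulKVmx // (mulmxA (diag_mx e)) mulmx_diag mulmxA.
  rewrite -mulmxA; congr (invmx B *m (diag_mx _ *m B)).
  by apply/rowP => j; rewrite !mxE exprS.
rewrite D mxtrace_mulC mulKVmx // !mxtrace_diag rmorph_sum.
apply: eq_bigr => j _; rewrite mxE Hu //.
have /dvdnP[q ->] : (#[x]%g %| #|gT|)%N by rewrite orderE -cardsT cardSg ?subsetT.
by rewrite mulnC exprM exp_e expr1n.
Qed.
Arguments chi_pow {gT u k} Hu i x.

Lemma aut_is_pow (n : nat) (u : {rmorphism algC -> algC}) : (0 < n)%N ->
  exists2 k, coprime k n & forall z : algC, z ^+ n = 1 -> u z = z ^+ k.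
Proof.
move=> n_gt0; have [e prim_e] := C_prim_root_exists n_gt0.
have pue : n.-primitive_root (u e) by rewrite fmorph_primitive_root.
have [i Di] := prim_rootP prim_e (prim_expr_order pue).
exists (val i).
  by rewrite -(prim_root_exp_coprime _ prim_e) -Di.
move=> z /(prim_rootP prim_e) [j ->].
by rewrite rmorphXn Di -!exprM mulnC.
Qed.

Lemma fixed_rat (gT : finGroupType) (F : gT -> rat) (i : Iirr [set: gT]) :
  let L := (\sum_x ratr (F x) * 'chi_i (x^-1)%g) / 'chi_i 1%g in
  (forall nu : {rmorphism algC -> algC}, nu L = L) -> L \in Crat.
Proof.
move=> L HL.
have [Qn galQn [QnC gQnC [w [prim_w genQn] QnG]]] := group_num_field_exists [set: gT]%G.
have dv (y : gT) : (#[y]%g %| #|[set: gT]%G|)%N.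
  by apply: order_dvdG; rewrite inE.
pose a y := sval (QnG _ _ 'chi_i (irr_char i) y (dv y)).
have Da y : QnC (a y) = 'chi_i y by rewrite /a; case: (QnG _ _ _ _ _ _).
pose b := (\sum_x ratr (F x) * a (x^-1)%g) / a 1%g.
have Db : QnC b = L.
  rewrite /b fmorph_div rmorph_sum Da /L; congr (_ / _); apply: eq_bigr => x _.
  by rewrite rmorphM fmorph_rat Da.
have: b \in fixedField 'Gal({:Qn} / 1%AS)%g.
  apply/fixedFieldP; first exact: memvf.
  move=> nu _; have [nuC DnuC] := gQnC nu.
  by apply: (fmorph_inj QnC); rewrite DnuC Db HL.
rewrite (galois_fixedField galQn) => /vlineP[r Dr].
by rewrite -Db Dr rmorphZ_num rmorph1 mulr1 Crat_rat.
Qed.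

Lemma cfF_subproof (gT : finGroupType) (f : gT -> rat)
  (fc : forall x y : gT, f (x ^ y)%g = f x) :
  is_class_fun <<[set: gT]>>%g [ffun x => (ratr (f x) : algC)].
Proof.
rewrite genGid; apply: intro_class_fun => [x y _ _|x]; first by rewrite fc.
by rewrite inE.
Qed.

Arguments cfF_subproof {gT f} fc.

Definition cfF (gT : finGroupType) (f : gT -> rat)
  (fc : forall x y : gT, f (x ^ y)%g = f x) : 'CF([set: gT]) :=
  Cfun 0 (cfF_subproof fc).

Arguments cfF {gT f} fc.

Lemma cfFE (gT : finGroupType) (f : gT -> rat)
  (fc : forall x y : gT, f (x ^ y)%g = f x) x : cfF fc x = ratr (f x).
Proof. by rewrite /cfF cfunE. Qed.

Lemma cayley_Mx (gT : finGroupType) (f : gT -> rat)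
  (fc : forall x y : gT, f (x ^ y)%g = f x) : cayley_mx f = Mx (cfF fc).
Proof. by apply/matrixP => a b; rewrite !mxE cfFE. Qed.

Lemma lambE (gT : finGroupType) (phi : 'CF([set: gT])) i :
  lamb phi i = (\sum_x phi x * 'chi_i (x^-1)%g) / 'chi_i 1%g.
Proof.
have E : \sum_(x in [set: gT]) phi x * ('chi_i x)^* = \sum_x phi x * 'chi_i (x^-1)%g.
  by rewrite sum_setT; apply: eq_bigr => x _; rewrite irr_inv.
rewrite /lamb cfdotE cardsT E.
have Hn := cardGT_neq0 gT; have H1 := irr1_neq0 i.
by field; apply/andP; split.
Qed.

Lemma lamb_cfF (gT : finGroupType) (f : gT -> rat)
  (fc : forall x y : gT, f (x ^ y)%g = f x) i :
  lamb (cfF fc) i = (\sum_x ratr (f x) * 'chi_i (x^-1)%g) / 'chi_i 1%g.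
Proof.
by rewrite lambE; congr (_ / _); apply: eq_bigr => x _; rewrite cfFE.
Qed.

Lemma lambB (gT : finGroupType) (phi psi : 'CF([set: gT])) i :
  lamb (phi - psi) i = lamb phi i - lamb psi i.
Proof. by rewrite /lamb cfdotBl !mulrBl. Qed.

Lemma inj_pow (gT : finGroupType) (k : nat) :
  coprime k #|gT| -> injective (fun x : gT => (x ^+ k)%g).
Proof.
move=> co; have co' : coprime #|[set: gT]%G| k by rewrite /= cardsT coprime_sym.
apply: (can_inj (g := fun x : gT => (x ^+ expg_invn [set: gT] k)%g)) => x.
exact: (expgK co' (in_setT x)).
Qed.

Arguments inj_pow {gT k} co.

Lemma card_gt0T (gT : finGroupType) : (0 < #|gT|)%N.
Proof. by apply/card_gt0P; exists 1%g. Qed.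

Lemma aut_lamb (gT : finGroupType) (f : gT -> rat) (i : Iirr [set: gT])
  (u : {rmorphism algC -> algC}) (k : nat) :
  (forall z : algC, z ^+ #|gT| = 1 -> u z = z ^+ k) ->
  u ((\sum_x ratr (f x) * 'chi_i (x^-1)%g) / 'chi_i 1%g)
  = (\sum_x ratr (f x) * 'chi_i ((x ^+ k)^-1)%g) / 'chi_i 1%g.
Proof.
move=> Hu; rewrite fmorph_div rmorph_sum (chi_pow Hu) expg1n.
congr (_ / _); apply: eq_bigr => x _.
by rewrite rmorphM fmorph_rat (chi_pow Hu) expVgn.
Qed.

Arguments aut_lamb {gT f i u k} Hu.

Theorem mainTheorem7 (gT : finGroupType) (f : gT -> rat)
  (f_class : forall x y : gT, f (x ^ y)%g = f x)
  (f_sym : forall x : gT, f (x^-1)%g = f x) :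
  (forall lambda : algC, eigenvalue (cayley_mx f) lambda -> lambda \in Crat)
  <->
  (forall h : nat, coprime h #|gT| -> forall g : gT, f (g ^+ h)%g = f g).
Proof.
rewrite cayley_Mx; split.
- move=> Hrat h co g.
  pose h' := expg_invn [set: gT] h.
  have co' : coprime #|[set: gT]%G| h by rewrite /= cardsT coprime_sym.
  have hK x : ((x ^+ h) ^+ h')%g = x := expgK co' (in_setT x).
  have f'c : forall x y : gT, f ((x ^ y) ^+ h')%g = f (x ^+ h')%g.
    by move=> x y; rewrite -conjXg f_class.
  pose psi := cfF f'c - cfF f_class.
  have [u Hu] := Qn_aut_exists co.
  have Hl i : lamb psi i = 0.
    have Lr : lamb (cfF f_class) i \in Crat.
      by apply: Hrat; apply/eigen_Mx; exists i.
    have E1 := aut_Crat u Lr.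
    have E2 : lamb (cfF f'c) i = u (lamb (cfF f_class) i).
      rewrite !lamb_cfF (aut_lamb Hu); congr (_ / _).
      rewrite [LHS](reindex_inj (inj_pow co)) /=.
      by apply: eq_bigr => x _; rewrite hK.
    by rewrite /psi lambB E2 E1 subrr.
  have Hpsi : psi = 0.
    rewrite (cfun_sum_cfdot psi) big1 // => i _.
    have Hn := cardGT_neq0 gT; have H1 := irr1_neq0 i.
    have Hc : '[psi, 'chi_i] = 0.
      apply: (mulIf (mulf_neq0 Hn (invr_neq0 H1))).
      by rewrite mul0r mulrA; exact: (Hl i).
    by rewrite Hc scale0r.
  have := congr1 (fun phi : 'CF([set: gT]) => phi (g ^+ h)%g) Hpsi.
  rewrite /psi !cfunE hK /= => /eqP; rewrite subr_eq0 => /eqP.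
  by move/fmorph_inj.
- move=> Hf lambda /eigen_Mx [i ->].
  rewrite lamb_cfF.
  apply: fixed_rat => nu.
  have [k cok Hk] := aut_is_pow _ nu (card_gt0T gT).
  rewrite (aut_lamb Hk); congr (_ / _).
  rewrite [RHS](reindex_inj (inj_pow cok)) /=.
  by apply: eq_bigr => x _; rewrite Hf.
Qed.
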